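(* Let $\Gamma$ be a finite group, $G=(V,E)$ a finite simple graph, $\phi:\Gamma\to\operatorname{Aut}(G)$ a homomorphism and $\tau:\Gamma\to O(\mathbb{R}^3)$ an injective homomorphism whose image $\tau(\Gamma)$ is one of the groups $C_i,C_s,C_2,C_{2v},C_{2h}$ below. If $(G,p)$ is a $\Gamma$-symmetric framework on $\mathcal{Y}$ (with respect to $\phi,\tau$) which is isostatic, then $G$ is $(2,2)$-tight and: - if $\tau(\Gamma)=C_i$: the element mapped to the inversion fixes no edge; - if $\tau(\Gamma)=C_s$: the element mapped to the reflection fixes no edge; - if $\tau(\Gamma)=C_2$: the element mapped to $c_2'$ fixes either exactly two edges and no vertex, or no edge and exactly one vertex; - if $\tau(\Gamma)=C_{2v}$: the elements mapped to $\sigma$ and $\sigma'$ fix no edge, and the element mapped to $c_2'$ fixes either exactly two edges and no vertex, or no edge and exactly one vertex; - if $\tau(\Gamma)=C_{2h}$: the elements mapped to $\sigma$ and to the inversion fix no edge, and the element mapped to $c_2'$ fixes exactly two edges and no vertex.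
   Context: $\mathcal{Y}=\{(x,y,z)\in\mathbb{R}^3:x^2+y^2=1\}$. A framework on $\mathcal{Y}$ is a pair $(G,p)$, $G=(V,E)$ finite simple, $p:V\to\mathcal{Y}$ with $p(u)\ne p(v)$ for $uv\in E$. Its rigidity matrix $R_{\mathcal{Y}}(G,p)$ is the $(|E|+|V|)\times 3|V|$ matrix with, for each edge $v_iv_j$, a row with $p(v_i)-p(v_j)$ in the columns of $v_i$, $p(v_j)-p(v_i)$ in the columns of $v_j$, zeros elsewhere, and for each vertex $v_i$ with $p(v_i)=(x_i,y_i,z_i)$ a row with $(x_i,y_i,0)$ in the columns of $v_i$, zeros elsewhere. Trivial infinitesimal motions are $u_i=(0,0,a)+b(-y_i,x_i,0)$. $(G,p)$ is infinitesimally rigid if every kernel vector of $R_{\mathcal{Y}}(G,p)$ is trivial, independent if its rows are linearly independent, isostatic if both. $(G,p)$ is $\Gamma$-symmetric w.r.t. $\phi,\tau$ if $\tau(\gamma)p(v)=p(\phi(\gamma)v)$ for all $v,\gamma$. A vertex $v$ is fixed by $\gamma$ if $\phi(\gamma)v=v$; an edge $uv$ is fixed if $\phi(\gamma)$ fixes both endpoints or swaps them. A graph is $(2,2)$-sparse if every subgraph $(V',E')$ with $V'\neq\emptyset$ has $|E'|\le 2|V'|-2$, and $(2,2)$-tight if moreover $|E|=2|V|-2$. Symmetry operations: $\sigma$ = reflection in a plane containing the $z$-axis; $\sigma'$ = reflection in the $xy$-plane; $c_2'$ = half-turn about a line through the origin perpendicular to the $z$-axis; $\varphi=-I$ the inversion.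 Groups: $C_i=\{\mathrm{id},\varphi\}$; $C_s=\{\mathrm{id},\sigma\}$ or $\{\mathrm{id},\sigma'\}$; $C_2=\{\mathrm{id},c_2'\}$; $C_{2v}=\{\mathrm{id},\sigma,\sigma',c_2'\}$; $C_{2h}=\{\mathrm{id},\sigma,c_2',\varphi\}$ (with the axis of $c_2'$ perpendicular to the plane of $\sigma$). *)

(* Defs.v *)
From HB Require Import structures.
From mathcomp Require Import all_boot all_order all_algebra fingroup.
From mathcomp Require Import reals.
Set Implicit Arguments. Unset Strict Implicit. Unset Printing Implicit Defensive.
Import Order.TTheory GRing.Theory Num.Theory.
Local Open Scope ring_scope.

Section CylinderDefs.
Variable R : realType.

Definition vec3 (a b c : R) : 'rV[R]_3 := \row_(i < 3) [:: a; b; c]`_i.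

Definition xco (x : 'rV[R]_3) : R := x 0 (0 : 'I_3).
Definition yco (x : 'rV[R]_3) : R := x 0 (1 : 'I_3).
Definition zco (x : 'rV[R]_3) : R := x 0 (2 : 'I_3).

Definition on_cylinder (x : 'rV[R]_3) : Prop := xco x ^+ 2 + yco x ^+ 2 = 1.

Variable V : finType.

Definition simple_graph (E : {set {set V}}) : Prop := forall e, e \in E -> #|e| = 2%N.

Definition framework_on_Y (E : {set {set V}}) (p : V -> 'rV[R]_3) : Prop :=
  (forall v, on_cylinder (p v)) /\
  (forall u v, [set u; v] \in E -> p u <> p v).

Definition other (e : {set V}) (w : V) : V := odflt w [pick x in e :\ w].

Definition rig_entry (p : V -> 'rV[R]_3) (r : {set V} + V) (c : V * 'I_3) : R :=
  match r with
  | inl e => if c.1 \in e then (p c.1 - p (other e c.1)) 0 c.2 else 0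
  | inr v => if c.1 == v then
               (if c.2 == (2 : 'I_3) then 0 else p v 0 c.2) else 0
  end.

(* R_Y(G,p): a (|E| + |V|) x 3|V| matrix; column j corresponds to the pair
   enum_val j = (v, k), i.e. coordinate k of vertex v. *)
Definition rigidity_matrix (E : {set {set V}}) (p : V -> 'rV[R]_3)
  : 'M[R]_(#|E| + #|{: V}|, #|{: V * 'I_3}|) :=
  \matrix_(i, j)
    match split i with
    | inl k => rig_entry p (inl (enum_val k)) (enum_val j)
    | inr k => rig_entry p (inr (enum_val k)) (enum_val j)
    end.

Definition vel (u : 'cV[R]_(#|{: V * 'I_3}|)) (v : V) (k : 'I_3) : R :=
  u (enum_rank (v, k)) 0.

Definition trivial_motion (p : V -> 'rV[R]_3) (u : 'cV[R]_(#|{: V * 'I_3}|)) : Prop :=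
  exists a b : R, forall v k,
    vel u v k = (vec3 0 0 a + b *: vec3 (- yco (p v)) (xco (p v)) 0) 0 k.

Definition inf_rigid (E : {set {set V}}) (p : V -> 'rV[R]_3) : Prop :=
  forall u, rigidity_matrix E p *m u = 0 -> trivial_motion p u.

Definition independent (E : {set {set V}}) (p : V -> 'rV[R]_3) : Prop :=
  row_free (rigidity_matrix E p).

Definition isostatic (E : {set {set V}}) (p : V -> 'rV[R]_3) : Prop :=
  inf_rigid E p /\ independent E p.

Definition sparse22 (E : {set {set V}}) : Prop :=
  forall (V' : {set V}) (E' : {set {set V}}),
    V' != set0 -> E' \subset E -> (forall e, e \in E' -> e \subset V') ->
    (#|E'| + 2 <= 2 * #|V'|)%N.

Definition tight22 (E : {set {set V}}) : Prop :=
  sparse22 E /\ (#|E| + 2 = 2 * #|{: V}|)%N.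

Variable gT : finGroupType.

Definition aut_hom (E : {set {set V}}) (phi : gT -> V -> V) : Prop :=
  (forall g, injective (phi g)) /\
  (forall g (e : {set V}), ((phi g @: e) \in E) = (e \in E)) /\
  (forall g h v, phi (g * h)%g v = phi g (phi h v)).

(* tau : Gamma -> O(R^3) an injective group homomorphism (matrices act on
   column vectors) *)
Definition orth_inj_hom (tau : gT -> 'M[R]_3) : Prop :=
  (forall g, tau g *m (tau g)^T = 1%:M) /\
  (forall g h, tau (g * h)%g = tau g *m tau h) /\
  injective tau.

Definition gamma_symmetric (phi : gT -> V -> V) (tau : gT -> 'M[R]_3)
  (p : V -> 'rV[R]_3) : Prop :=
  forall g v, p (phi g v) = (tau g *m (p v)^T)^T.

Definition fixed_edges (E : {set {set V}}) (phi : gT -> V -> V) (g : gT)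
  : {set {set V}} := [set e in E | phi g @: e == e].

Definition fixed_vertices (phi : gT -> V -> V) (g : gT) : {set V} :=
  [set v | phi g v == v].

Definition image_is (tau : gT -> 'M[R]_3) (S : seq 'M[R]_3) : Prop :=
  forall M, (exists g, tau g = M) <-> M \in S.

End CylinderDefs.

Section SymOps.
Variable R : realType.

Definition unit2 (a b : R) : Prop := a ^+ 2 + b ^+ 2 = 1.

(* sigma: reflection in the plane containing the z-axis with unit normal (a,b,0) *)
Definition refl_vert (a b : R) : 'M[R]_3 :=
  1%:M - 2 *: ((vec3 a b 0)^T *m vec3 a b 0).

Definition refl_horiz : 'M[R]_3 := diag_mx (vec3 1 1 (-1)).

(* c_2': half-turn about the line through 0 with unit direction (a,b,0) *)
Definition halfturn (a b : R) : 'M[R]_3 :=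
  2 *: ((vec3 a b 0)^T *m vec3 a b 0) - 1%:M.

Definition inversion : 'M[R]_3 := - 1%:M.

Variable gT : finGroupType.

Definition is_Ci (tau : gT -> 'M[R]_3) : Prop := image_is tau [:: 1%:M; inversion].
Definition is_Cs_vert (tau : gT -> 'M[R]_3) (a b : R) : Prop :=
  unit2 a b /\ image_is tau [:: 1%:M; refl_vert a b].
Definition is_Cs_horiz (tau : gT -> 'M[R]_3) : Prop :=
  image_is tau [:: 1%:M; refl_horiz].
Definition is_C2 (tau : gT -> 'M[R]_3) (a b : R) : Prop :=
  unit2 a b /\ image_is tau [:: 1%:M; halfturn a b].
Definition is_C2v (tau : gT -> 'M[R]_3) (a b c d : R) : Prop :=
  unit2 a b /\ unit2 c d /\
  image_is tau [:: 1%:M; refl_vert a b; refl_horiz; halfturn c d].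
(* C_2h: the axis of c_2' is perpendicular to the plane of sigma *)
Definition is_C2h (tau : gT -> 'M[R]_3) (a b : R) : Prop :=
  unit2 a b /\
  image_is tau [:: 1%:M; refl_vert a b; halfturn a b; inversion].

Definition allowed_group (tau : gT -> 'M[R]_3) : Prop :=
  is_Ci tau \/ (exists a b, is_Cs_vert tau a b) \/ is_Cs_horiz tau \/
  (exists a b, is_C2 tau a b) \/ (exists a b c d, is_C2v tau a b c d) \/
  (exists a b, is_C2h tau a b).

End SymOps.

Arguments refl_horiz {R}.
Arguments inversion {R}.

(* Main.v *)
Require Import Defs.
From HB Require Import structures.
From mathcomp Require Import all_boot all_order all_algebra fingroup.
From mathcomp Require Import reals.
From mathcomp Require Import ring lra.
Import Order.TTheory GRing.Theory Num.Theory.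
Local Open Scope ring_scope.
Set Implicit Arguments. Unset Strict Implicit. Unset Printing Implicit Defensive.

Section Main.
Variable R : realType.
Variable V : finType.
Variable E : {set {set V}}.
Variable p : V -> 'rV[R]_3.

Local Notation n := #|{: V * 'I_3}|.
Local Notation RM := (rigidity_matrix E p).

Lemma sum3 (F : 'I_3 -> R) : \sum_k F k = F 0 + F 1 + F 2.
Proof.
rewrite !big_ord_recl big_ord0 addr0 addrA; congr (F _ + F _ + F _); exact: val_inj.
Qed.

Lemma ord3 (k : 'I_3) : k = 0 \/ k = 1 \/ k = 2.
Proof. case: k => [[|[|[|//]]]] ?; [left|right;left|right;right]; exact: val_inj. Qed.

Lemma ord2 (k : 'I_2) : k = 0 \/ k = 1.
Proof. case: k => [[|[|//]]] ?; [left|right]; exact: val_inj. Qed.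

Lemma sumI (G : 'I_n -> R) : \sum_i G i = \sum_v \sum_k G (enum_rank (v, k)).
Proof.
rewrite (reindex enum_rank); last by exists enum_val => x _; rewrite ?enum_rankK ?enum_valK.
rewrite pair_bigA; apply: eq_bigr => -[v k] _ //.
Qed.

Lemma RM_edge k v l :
  RM (lshift _ k) (enum_rank (v, l)) =
  if v \in enum_val k then (p v - p (other (enum_val k) v)) 0 l else 0.
Proof. by rewrite mxE (unsplitK (inl _ : 'I_#|E| + 'I_#|{: V}|)) /= enum_rankK. Qed.

Lemma RM_vert k v l :
  RM (rshift _ k) (enum_rank (v, l)) =
  if v == enum_val k then (if l == 2 then 0 else p v 0 l) else 0.
Proof.
rewrite mxE (unsplitK (inr _ : 'I_#|E| + 'I_#|{: V}|)) /= enum_rankK /=.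
by case: eqP => // ->.
Qed.

Lemma other2 (u w : V) : u != w -> other [set u; w] u = w.
Proof.
move=> uw; rewrite /other; case: pickP => [x|H].
  rewrite !inE => /andP[xu /orP[]] /eqP // xu'; by rewrite xu' eqxx in xu.
by have := H w; rewrite !inE eqxx orbT andbT eq_sym uw.
Qed.

Lemma edge2 (e : {set V}) (w : V) : #|e| = 2%N -> w \in e -> exists o, o != w /\ e = [set w; o].
Proof.
move=> ce we.
have /cards1P[o Ho] : #|e :\ w| == 1%N.
  by apply/eqP; move: (cardsD1 w e); rewrite we ce add1n => -[].
have : o \in e :\ w by rewrite Ho set11.
rewrite !inE => /andP[ow _]; exists o; split => //.
by rewrite -{1}(setD1K we) Ho.
Qed.


Definition kvec (j : 'I_2) (v : V) (k : 'I_3) : R :=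
  if j == 0 then (k == 2 :> 'I_3)%:R else [:: - yco (p v); xco (p v); 0]`_k.

Definition Kmx : 'M[R]_(n, 2) := \matrix_(i, j) kvec j (enum_val i).1 (enum_val i).2.

Lemma KmxE v k j : Kmx (enum_rank (v, k)) j = kvec j v k.
Proof. by rewrite mxE enum_rankK. Qed.

Lemma RK0 : simple_graph E -> RM *m Kmx = 0.
Proof.
move=> Hs; apply/matrixP => i j; rewrite !mxE sumI.
rewrite -(splitK i); case: (split i) => k /=.
  set e := enum_val k.
  have eE : e \in E by exact: enum_valP.
  have ce := Hs _ eE.
  have [u ue] : exists u, u \in e by apply/set0Pn; rewrite -card_gt0 ce.
  have [o [ou ee]] := edge2 ce ue.
  under eq_bigr do under eq_bigr do rewrite RM_edge KmxE -/e.
  rewrite (eq_bigr (fun v => if v \in e then \sum_l (p v - p (other e v)) 0 l * kvec j v l else 0)); last first.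
    by move=> v _; case: ifP => _ //; apply: big1 => l _; rewrite mul0r.
  rewrite -big_mkcond /= ee big_setU1 /=; last by rewrite inE eq_sym.
  rewrite big_set1 other2 1?eq_sym // setUC other2 // !sum3.
  rewrite /kvec /xco /yco !mxE; case: j => [[|[|//]]] /= _; ring.
rewrite (bigD1 (enum_val k)) //= [X in _ + X]big1; last first.
  move=> v vk; apply: big1 => l _; by rewrite RM_vert (negbTE vk) mul0r.
rewrite addr0 sum3.
rewrite !RM_vert eqxx !KmxE /kvec /xco /yco /=.
case: j => [[|[|//]]] /= _; ring.
Qed.


Local Notation m := (#|E| + #|{: V}|)%N.

Definition sig (g : V -> V) (i : 'I_m) : 'I_m :=
  match split i with
  | inl k => lshift _ (enum_rank_in (enum_valP k) (g @: enum_val k))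
  | inr k => rshift _ (enum_rank (g (enum_val k)))
  end.

Lemma sig_l g k : sig g (lshift _ k) = lshift _ (enum_rank_in (enum_valP k) (g @: enum_val k)).
Proof. by rewrite /sig (unsplitK (inl _ : 'I_#|E| + 'I_#|{: V}|)). Qed.

Lemma sig_r g k : sig g (rshift _ k) = rshift _ (enum_rank (g (enum_val k))).
Proof. by rewrite /sig (unsplitK (inr _ : 'I_#|E| + 'I_#|{: V}|)). Qed.

Lemma sigK (g1 g2 : V -> V) : (forall v, g2 (g1 v) = v) ->
  (forall e : {set V}, (g1 @: e \in E) = (e \in E)) -> forall i, sig g2 (sig g1 i) = i.
Proof.
move=> H21 HE i; rewrite -(splitK i); case: (split i) => k /=.
  rewrite sig_l sig_l; congr lshift; apply: enum_val_inj.
  have H1 : g1 @: enum_val k \in E by rewrite HE enum_valP.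
  rewrite enum_rankK_in; last first.
    by rewrite (enum_rankK_in _ H1) -imset_comp (eq_imset _ H21) imset_id enum_valP.
  by rewrite (enum_rankK_in _ H1) -imset_comp (eq_imset _ H21) imset_id.
by rewrite sig_r sig_r enum_rankK H21 enum_valK.
Qed.

Definition Pmx (g : V -> V) : 'M[R]_m := \matrix_(i, j) ((i == sig g j)%:R).

Variables (f h : V -> V) (T : 'M[R]_3) (e1 e2 : R).
Hypothesis Hfh : forall v, f (h v) = v.
Hypothesis Hhf : forall v, h (f v) = v.
Hypothesis HfE : forall e : {set V}, (f @: e \in E) = (e \in E).
Hypothesis HhE : forall e : {set V}, (h @: e \in E) = (e \in E).
Hypothesis Hp : forall v, p (f v) = (T *m (p v)^T)^T.
Hypothesis HT : T *m T^T = 1%:M.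
Hypothesis T02 : T 0 2 = 0.
Hypothesis T12 : T 1 2 = 0.
Hypothesis T20 : T 2 0 = 0.
Hypothesis T21 : T 2 1 = 0.
Hypothesis T22 : T 2 2 = e1.
Hypothesis T01 : T 0 1 = - e2 * T 1 0.
Hypothesis T00 : T 0 0 = e2 * T 1 1.
Hypothesis He2 : e2 ^+ 2 = 1.

Lemma finj : injective f.
Proof. by move=> x y /(congr1 h); rewrite !Hhf. Qed.

Lemma pfE v k : p (f v) 0 k = \sum_j T k j * p v 0 j.
Proof. by rewrite Hp !mxE; apply: eq_bigr => j _; rewrite !mxE. Qed.

Lemma TtT j l : \sum_k T k j * T k l = (j == l)%:R.
Proof.
have := mulmx1C HT => /matrixP /(_ j l); rewrite !mxE => <-.
by apply: eq_bigr => k _; rewrite mxE.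
Qed.

Lemma TtT3 j l : T 0 j * T 0 l + T 1 j * T 1 l + T 2 j * T 2 l = (j == l)%:R.
Proof. by rewrite -TtT sum3. Qed.

Definition rho : 'M[R]_n := \matrix_(i, j)
  if (enum_val i).1 == f (enum_val j).1 then T (enum_val i).2 (enum_val j).2 else 0.

Lemma RrhoE i w l :
  (RM *m rho) i (enum_rank (w, l)) = \sum_k RM i (enum_rank (f w, k)) * T k l.
Proof.
rewrite mxE sumI (bigD1 (f w)) //= [X in _ + X]big1 ?addr0.
  by apply: eq_bigr => k _; rewrite [rho _ _]mxE !enum_rankK /= eqxx.
move=> v vk; apply: big1 => k _; by rewrite [rho _ _]mxE !enum_rankK /= (negbTE vk) mulr0.
Qed.

Lemma orthsum (d : 'I_3 -> R) l : \sum_k (\sum_j T k j * d j) * T k l = d l.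
Proof.
under eq_bigr do rewrite mulr_suml.
rewrite exchange_big /=.
transitivity (\sum_j d j * (j == l)%:R).
  apply: eq_bigr => j _; rewrite -TtT mulr_sumr; apply: eq_bigr => k _; ring.
rewrite (bigD1 l) //= eqxx mulr1 big1 ?addr0 // => j /negbTE ->; by rewrite mulr0.
Qed.

Lemma row_sym (Hs : simple_graph E) r c : (RM *m rho) (sig f r) c = RM r c.
Proof.
rewrite -(enum_valK c); case: (enum_val c) => w l; rewrite RrhoE.
rewrite -(splitK r); case: (split r) => k /=.
  rewrite sig_l RM_edge.
  set e := enum_val k.
  have eE : e \in E by exact: enum_valP.
  have feE : f @: e \in E by rewrite HfE.
  under eq_bigr do rewrite RM_edge (enum_rankK_in _ feE) (mem_imset _ _ finj).
  case: ifP => we; last by apply: big1 => k0 _; rewrite mul0r.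
  have [o [ow ee]] := edge2 (Hs _ eE) we.
  have fe : f @: e = [set f w; f o] by rewrite ee imsetU1 imset_set1.
  rewrite fe ee !other2 ?(inj_eq finj) 1?eq_sym //.
  rewrite -(orthsum (fun j => (p w - p o) 0 j) l).
  apply: eq_bigr => k0 _; congr (_ * _); rewrite !mxE !pfE -sumrB.
  by apply: eq_bigr => j _; rewrite !mxE mulrBr.
rewrite sig_r.
under eq_bigr do rewrite RM_vert enum_rankK (inj_eq finj).
rewrite RM_vert; case: eqP => [->|_]; last by apply: big1 => k0 _; rewrite mul0r.
rewrite sum3 !pfE !sum3 /=.
have c00 := TtT3 0 0; have c01 := TtT3 0 1; have c11 := TtT3 1 1.
have c10 := TtT3 1 0; have c20 := TtT3 2 0; have c21 := TtT3 2 1.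
rewrite /= in c00 c01 c11 c10 c20 c21.
case: l => [[|[|[|//]]]] /= Hl.
- have -> : Ordinal Hl = 0 :> 'I_3 by apply: val_inj.
  rewrite T02 T12; rewrite T20 T21 in c00 c01.
  set x := p (enum_val k) 0 0; set y := p (enum_val k) 0 1; set z := p (enum_val k) 0 2.
  transitivity (x * (T 0 0 * T 0 0 + T 1 0 * T 1 0 + 0 * 0) + y * (T 0 0 * T 0 1 + T 1 0 * T 1 1 + 0 * 0)); first ring.
  by rewrite c00 c01; ring.
- have -> : Ordinal Hl = 1 :> 'I_3 by apply: val_inj.
  rewrite T02 T12; rewrite T20 T21 in c11 c10.
  set x := p (enum_val k) 0 0; set y := p (enum_val k) 0 1; set z := p (enum_val k) 0 2.
  transitivity (x * (T 0 1 * T 0 0 + T 1 1 * T 1 0 + 0 * 0) + y * (T 0 1 * T 0 1 + T 1 1 * T 1 1 + 0 * 0)); first ring.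
  by rewrite c11 c10; ring.
- have -> : Ordinal Hl = 2 :> 'I_3 by apply: val_inj.
  rewrite T02 T12; ring.
Qed.


Lemma PRM (Hs : simple_graph E) : Pmx f *m RM = RM *m rho.
Proof.
apply/matrixP => i c; rewrite mxE.
have ee : forall j, (i == sig f j) = (j == sig h i).
  move=> j; apply/eqP/eqP => [->|->]; [by rewrite (sigK Hhf HfE) | by rewrite (sigK Hfh HhE)].
under eq_bigr do rewrite mxE ee.
rewrite (bigD1 (sig h i)) //= eqxx mul1r big1 ?addr0.
  by rewrite -{2}(sigK Hfh HhE i) row_sym.
by move=> j /negbTE ->; rewrite mul0r.
Qed.

Definition Dmx : 'M[R]_2 := \matrix_(i, j) if i == j then (if i == 0 then e1 else e2) else 0.

Lemma trD : \tr Dmx = e1 + e2.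
Proof. by rewrite /mxtrace !big_ord_recl big_ord0 !mxE /= addr0. Qed.

Lemma rhoK : rho *m Kmx = Kmx *m Dmx.
Proof.
apply/matrixP => c j; rewrite -(enum_valK c); case: (enum_val c) => v k.
rewrite mxE sumI (bigD1 (h v)) //= [X in _ + X]big1 ?addr0; last first.
  move=> w wv; apply: big1 => l _; rewrite mxE !enum_rankK /=.
  case: eqP => [vfw|]; last by rewrite mul0r.
  by move: wv; rewrite vfw Hhf eqxx.
under eq_bigr do rewrite mxE !enum_rankK /= Hfh eqxx KmxE.
rewrite [RHS]mxE [RHS]big_ord_recl [X in _ = _ + X]big_ord_recl big_ord0 addr0 !KmxE !mxE.
have pv : forall k, p v 0 k = \sum_j T k j * p (h v) 0 j by move=> k'; rewrite -{1}(Hfh v) pfE.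
rewrite sum3 /kvec /xco /yco !pv !sum3.
have [->|->] := ord2 j; have [->|[->|->]] := ord3 k; rewrite /=.
all: rewrite ?T02 ?T12 ?T20 ?T21 ?T22.
all: try (rewrite ?T00 ?T01; ring).
rewrite T00 T01; transitivity ((T 1 1 * p (h v) 0 0 - T 1 0 * p (h v) 0 1) * e2 ^+ 2); first by rewrite He2; ring.
ring.
Qed.


Variable v0 : V.

Definition Lsel : 'M[R]_(2, n) := \matrix_(i, c)
  if i == 0 then (c == enum_rank (v0, 2))%:R
  else - yco (p v0) * (c == enum_rank (v0, 0))%:R + xco (p v0) * (c == enum_rank (v0, 1))%:R.

Lemma sum_ind (c0 : 'I_n) (G : 'I_n -> R) : \sum_c (c == c0)%:R * G c = G c0.
Proof.
rewrite (bigD1 c0) //= eqxx mul1r big1 ?addr0 // => c /negbTE ->; by rewrite mul0r.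
Qed.

Lemma LselE_sum (G : 'I_n -> R) i : \sum_c Lsel i c * G c =
  if i == 0 then G (enum_rank (v0, 2))
  else - yco (p v0) * G (enum_rank (v0, 0)) + xco (p v0) * G (enum_rank (v0, 1)).
Proof.
under eq_bigr do rewrite mxE.
case: eqP => _; first by rewrite sum_ind.
under eq_bigr do rewrite mulrDl -!mulrA.
by rewrite big_split /= -!mulr_sumr !sum_ind.
Qed.

Hypothesis Hcyl : on_cylinder (p v0).

Lemma LselK : Lsel *m Kmx = 1%:M.
Proof.
apply/matrixP => i j; rewrite mxE LselE_sum !KmxE /kvec !mxE.
move: Hcyl; rewrite /on_cylinder /xco /yco => Hc.
have [->|->] := ord2 i; have [->|->] := ord2 j; rewrite /=; try ring.
by rewrite -Hc; ring.
Qed.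

Lemma Qfix (Hrig : inf_rigid E p) (u : 'cV[R]_n) : RM *m u = 0 -> Kmx *m (Lsel *m u) = u.
Proof.
move=> /Hrig [a [b Hab]].
have uE : forall c, u c 0 = a * kvec 0 (enum_val c).1 (enum_val c).2 + b * kvec 1 (enum_val c).1 (enum_val c).2.
  move=> c; rewrite -{1}(enum_valK c); case: (enum_val c) => v k.
  rewrite -[LHS]/(vel u v k) Hab !mxE /kvec /=.
  by have [->|[->|->]] := ord3 k; rewrite /=; ring.
move: Hcyl; rewrite /on_cylinder => Hc.
apply/matrixP => c j; have -> : j = 0 by apply: val_inj; case: j => [[]].
rewrite -(enum_valK c); case: (enum_val c) => v k.
rewrite mxE !big_ord_recl big_ord0 addr0 !KmxE !mxE !LselE_sum /= !uE !enum_rankK /=.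
rewrite /kvec /=.
transitivity ((k == 2 :> 'I_3)%:R * a + [:: - yco (p v); xco (p v); 0]`_k * (b * (xco (p v0) ^+ 2 + yco (p v0) ^+ 2))).
  rewrite /xco /yco; ring.
by rewrite Hc mulr1 mulrC [X in _ + X]mulrC.
Qed.

Theorem trace_eq (Hs : simple_graph E) (Hrig : inf_rigid E p) (Hfree : row_free RM) :
  \tr (Pmx f) = \tr rho - (e1 + e2).
Proof.
have [S HS] := row_freeP Hfree.
set W := 1%:M - S *m RM.
have RW : RM *m W = 0 by rewrite mulmxBr mulmx1 mulmxA HS mul1mx subrr.
have KLW : Kmx *m (Lsel *m W) = W.
  apply/matrixP => i j.
  have RWc : RM *m col j W = 0 by rewrite colE mulmxA RW mul0mx.
  have H := Qfix Hrig RWc.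
  rewrite !colE !mulmxA -!colE in H.
  move/matrixP: H => /(_ i 0) H; rewrite mulmxA; by rewrite !mxE in H |- *.
have WK : W *m Kmx = Kmx by rewrite mulmxBl mul1mx -mulmxA RK0 // mulmx0 subr0.
have -> : \tr (Pmx f) = \tr (rho *m (S *m RM)).
  rewrite -[Pmx f]mulmx1 -HS mulmxA PRM // -mulmxA mxtrace_mulC mulmxA //.
have -> : S *m RM = 1%:M - W by rewrite /W opprB addrC subrK.
rewrite mulmxBr mulmx1 raddfB /=; congr (_ - _).
rewrite -KLW [rho *m _]mulmxA rhoK -mulmxA mxtrace_mulC -!mulmxA WK LselK mulmx1 trD //.
Qed.


Lemma card_sum (X : finType) (A : {set X}) :
  \sum_x (if x \in A then 1 else 0 : R) = #|A|%:R.
Proof. by rewrite -big_mkcond /= sumr_const. Qed.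

Lemma tr_rho : \tr rho = #|[set v | f v == v]|%:R * \tr T.
Proof.
rewrite /mxtrace sumI -card_sum mulr_suml; apply: eq_bigr => v _.
rewrite inE eq_sym; under eq_bigr do rewrite mxE enum_rankK /=.
case: eqP => _; last by rewrite mul0r big1.
by rewrite mul1r.
Qed.

Lemma tr_P : \tr (Pmx f) = (#|[set e in E | f @: e == e]| + #|[set v | f v == v]|)%:R.
Proof.
rewrite /mxtrace big_split_ord /= natrD; congr (_ + _).
  under eq_bigr do rewrite mxE sig_l eq_lshift.
  rewrite -card_sum.
  transitivity (\sum_(k < #|E|) (if f @: enum_val k == enum_val k then 1 else 0 : R)).
    apply: eq_bigr => k _.
    suff -> : (k == enum_rank_in (enum_valP k) (f @: enum_val k)) = (f @: enum_val k == enum_val k).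
      by case: eqP.
    apply/eqP/eqP => [Hk|Hk].
      have fE : f @: enum_val k \in E by rewrite HfE enum_valP.
      by rewrite {2}Hk enum_rankK_in.
    by rewrite Hk enum_valK_in.
  rewrite -(big_enum_val (fun e : {set V} => if f @: e == e then 1 else 0 : R)) big_mkcond.
  by apply: eq_bigr => e _; rewrite inE; case: (e \in E).
under eq_bigr do rewrite mxE sig_r eq_rshift.
rewrite -card_sum (reindex enum_rank); last first.
  by exists enum_val => x _; rewrite ?enum_rankK ?enum_valK.
apply: eq_bigr => v _; rewrite inE enum_rankK.
by rewrite (inj_eq enum_rank_inj) eq_sym; case: eqP.
Qed.

End Main.

Lemma sumW (R : realType) (T : finType) (W : {set T}) (G : T -> R) (c : T) :
  \sum_(j < #|W|) G (enum_val j) * (enum_val j == c)%:R = if c \in W then G c else 0.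
Proof.
case: ifP => Hc.
  rewrite (bigD1 (enum_rank_in Hc c)) //= enum_rankK_in // eqxx mulr1 big1 ?addr0 // => j Hj.
  rewrite (_ : (enum_val j == c) = false) ?mulr0 //.
  apply/negbTE; apply: contra Hj => /eqP Hjc; apply/eqP; apply: enum_val_inj.
  by rewrite enum_rankK_in.
apply: big1 => j _; have := enum_valP j; case: eqP => [->|]; by [rewrite Hc | rewrite mulr0].
Qed.

Lemma sum_onW (R : realType) (T : finType) (W : {set T}) (G : T -> R) :
  (forall c, c \notin W -> G c = 0) -> \sum_(j < #|W|) G (enum_val j) = \sum_c G c.
Proof.
move=> H; rewrite -big_enum_val big_mkcond /=; apply: eq_bigr => c _.
by case: ifP => // /negbT /H ->.
Qed.

From mathcomp Require Import zify.

Section Sparse.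
Variable R : realType.
Variable V : finType.
Variable E : {set {set V}}.
Variable p : V -> 'rV[R]_3.
Local Notation n := #|{: V * 'I_3}|.
Local Notation m := (#|E| + #|{: V}|)%N.
Local Notation RM := (rigidity_matrix E p).
Hypothesis Hs : simple_graph E.
Hypothesis Hfree : row_free RM.
Hypothesis Hcyl : forall v, on_cylinder (p v).

Lemma rowsub_free m' (g : 'I_m' -> 'I_m) : injective g -> row_free (rowsub g RM).
Proof.
move=> ginj; apply: inj_row_free => v.
rewrite rowsubE mulmxA => H.
have H0 : v *m rowsub g 1%:M = 0 by apply: (row_free_inj Hfree); rewrite /= H mul0mx.
apply/rowP => j; move/rowP: H0 => /(_ (g j)); rewrite !mxE => <-.
under eq_bigr do rewrite !mxE (inj_eq ginj).
by rewrite (bigD1 j) //= eqxx mulr1 big1 ?addr0 // => j' /negbTE ->; rewrite mulr0.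
Qed.

Lemma sparse : sparse22 E.
Proof.
move=> V' E' nV' sE' eV'.
set X1 := [set k : 'I_#|E| | enum_val k \in E'].
set X2 := [set k : 'I_#|{: V}| | enum_val k \in V'].
set I : {set 'I_m} := (@lshift #|E| #|{: V}| @: X1) :|: (@rshift #|E| #|{: V}| @: X2).
have cX1 : #|X1| = #|E'|.
  have -> : E' = enum_val @: X1.
    apply/setP => e; apply/idP/imsetP; last by case=> k; rewrite inE => Hk ->.
    move=> He; have eE : e \in E := subsetP sE' _ He.
    by exists (enum_rank_in eE e); rewrite ?inE enum_rankK_in.
  by rewrite card_imset //; exact: enum_val_inj.
have cX2 : #|X2| = #|V'|.
  have -> : V' = enum_val @: X2.
    apply/setP => v; apply/idP/imsetP; last by case=> k; rewrite inE => Hk ->.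
    by move=> Hv; exists (enum_rank v); rewrite ?inE enum_rankK.
  by rewrite card_imset //; exact: enum_val_inj.
have cI : #|I| = (#|E'| + #|V'|)%N.
  rewrite -cX1 -cX2 -(card_imset X1 (@lshift_inj #|E| #|{: V}|)) -(card_imset X2 (@rshift_inj #|E| #|{: V}|)) -cardsUI.
  suff -> : @lshift #|E| #|{: V}| @: X1 :&: @rshift #|E| #|{: V}| @: X2 = set0 by rewrite cards0 addn0.
  apply/setP => i; rewrite !inE; apply/andP => -[/imsetP[a _ ->] /imsetP[b _ /eqP]].
  by rewrite eq_lrshift.
set W : {set 'I_n} := enum_rank @: setX V' [set: 'I_3].
have cW : #|W| = (3 * #|V'|)%N.
  rewrite card_imset ?cardsX ?cardsT ?card_ord 1?mulnC //; exact: enum_rank_inj.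
have inW : forall v k, (enum_rank (v, k) \in W) = (v \in V').
  by move=> v k; rewrite mem_imset ?in_setX ?inE ?andbT //; exact: enum_rank_inj.
set A := rowsub (fun j : 'I_#|I| => enum_val j) RM.
have rA : \rank A = #|I| by apply/eqP; apply: rowsub_free; exact: enum_val_inj.
have zero : forall j c, c \notin W -> A j c = 0.
  move=> j c; rewrite -(enum_valK c); case: (enum_val c) => w l; rewrite inW => wV.
  rewrite mxE; have : enum_val j \in I := enum_valP j.
  rewrite inE => /orP[] /imsetP[k]; rewrite inE => Hk ->.
    rewrite RM_edge; case: ifP => // we.
    by move: (subsetP (eV' _ Hk) _ we); rewrite (negbTE wV).
  rewrite RM_vert; case: eqP => // wk.
  by rewrite wk Hk in wV.
pose C : 'M[R]_(#|I|, #|W|) := \matrix_(i, j) A i (enum_val j).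
pose B : 'M[R]_(#|W|, n) := \matrix_(j, c) (enum_val j == c)%:R.
have CE : forall i j, C i j = A i (enum_val j) by move=> i j; exact: mxE.
have BE : forall j c, B j c = (enum_val j == c)%:R by move=> j c; exact: mxE.
have AE' : forall i c, A i c = RM (enum_val i) c by move=> i c; exact: mxE.
have AE : A = C *m B.
  apply/matrixP => i c.
  have -> : (C *m B) i c = \sum_j C i j * B j c by exact: mxE.
  under eq_bigr do rewrite CE BE.
  by rewrite (@sumW R _ W (fun c => A i c) c); case: ifP => // /negbT /zero ->.
have rAC : (\rank A <= \rank C)%N by rewrite AE mxrankM_maxl.
pose Kc : 'M[R]_(#|W|, 2) := \matrix_(j, i) Kmx p (enum_val j) i.
have KcE : forall j i, Kc j i = Kmx p (enum_val j) i by move=> j i; exact: mxE.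
have CK : C *m Kc = 0.
  apply/matrixP => i i'.
  have -> : (C *m Kc) i i' = \sum_j C i j * Kc j i' by exact: mxE.
  under eq_bigr do rewrite CE KcE.
  rewrite (sum_onW (G := fun c => A i c * Kmx p c i')); last by move=> c /zero ->; rewrite mul0r.
  have := RK0 p Hs; move/matrixP/(_ (enum_val i) i').
  have -> : (RM *m Kmx p) (enum_val i) i' = \sum_c RM (enum_val i) c * Kmx p c i' by exact: mxE.
  move=> H; under eq_bigr do rewrite AE'; by rewrite H !mxE.
have [v1 v1V] : exists v1, v1 \in V' by apply/set0Pn.
pose L' : 'M[R]_(2, #|W|) := \matrix_(i, j) Lsel p v1 i (enum_val j).
have L'E : forall i j, L' i j = Lsel p v1 i (enum_val j) by move=> i j; exact: mxE.
have LK : L' *m Kc = 1%:M.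
  rewrite -(LselK (Hcyl v1)); apply/matrixP => i i'.
  have -> : (L' *m Kc) i i' = \sum_j L' i j * Kc j i' by exact: mxE.
  have -> : (Lsel p v1 *m Kmx p) i i' = \sum_c Lsel p v1 i c * Kmx p c i' by exact: mxE.
  under eq_bigr do rewrite L'E KcE.
  apply: (sum_onW (G := fun c => Lsel p v1 i c * Kmx p c i')) => c cWn.
  have nc : forall k, (c == enum_rank (v1, k)) = false.
    by move=> k; apply/negbTE; apply: contraNneq cWn => ->; rewrite inW.
  by rewrite mxE !nc; case: eqP => _; rewrite /= ?(mulr0n, mulr0, mul0r, addr0).
have rK : (2 <= \rank Kc)%N by rewrite -[X in (X <= _)%N](mxrank1 R 2) -LK mxrankM_maxr.
have Hb := mulmx0_rank_max CK.
move: rAC; rewrite rA => rAC; lia.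
Qed.

End Sparse.


Section Mats.
Variable R : realType.

Definition goodT (T : 'M[R]_3) (e1 e2 : R) : Prop :=
  [/\ T 0 2 = 0, T 1 2 = 0, T 2 0 = 0, T 2 1 = 0 &
   [/\ T 2 2 = e1, T 0 1 = - e2 * T 1 0, T 0 0 = e2 * T 1 1 & e2 ^+ 2 = 1]].

Lemma tr3 (T : 'M[R]_3) : \tr T = T 0 0 + T 1 1 + T 2 2.
Proof. by rewrite /mxtrace sum3. Qed.

Lemma rvE (a b : R) i j : refl_vert a b i j = (i == j)%:R - 2 * ([:: a; b; 0]`_i * [:: a; b; 0]`_j).
Proof. by rewrite !mxE big_ord1 !mxE. Qed.

Lemma htE (a b : R) i j : halfturn a b i j = 2 * ([:: a; b; 0]`_i * [:: a; b; 0]`_j) - (i == j)%:R.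
Proof. by rewrite !mxE big_ord1 !mxE. Qed.

Lemma rhE i j : (refl_horiz : 'M[R]_3) i j = [:: 1; 1; -1]`_i *+ (i == j).
Proof. by rewrite !mxE. Qed.

Lemma invE i j : (inversion : 'M[R]_3) i j = - (i == j)%:R.
Proof. by rewrite !mxE. Qed.

Lemma idE i j : (1%:M : 'M[R]_3) i j = (i == j)%:R.
Proof. by rewrite !mxE. Qed.

Lemma good_id : goodT 1%:M 1 1 /\ \tr (1%:M : 'M[R]_3) = 3.
Proof. by rewrite tr3 !idE /=; split; [split; rewrite ?idE //=; split; rewrite ?idE /=; ring | ring]. Qed.

Lemma good_inv : goodT inversion (-1) 1 /\ \tr (inversion : 'M[R]_3) = -3.
Proof. by rewrite tr3 !invE /=; split; [split; rewrite ?invE //=; rewrite ?oppr0 //; split; rewrite ?invE /=; ring | ring]. Qed.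

Lemma good_rh : goodT refl_horiz (-1) 1 /\ \tr (refl_horiz : 'M[R]_3) = 1.
Proof. by rewrite tr3 !rhE /=; split; [split; rewrite ?rhE //=; split; rewrite ?rhE /=; ring | ring]. Qed.

Lemma good_rv (a b : R) : unit2 a b -> goodT (refl_vert a b) 1 (-1) /\ \tr (refl_vert a b) = 1.
Proof.
rewrite /unit2 => hab; rewrite tr3 !rvE /=; split; last first.
  transitivity (3 - 2 * (a ^+ 2 + b ^+ 2)); first ring. by rewrite hab; ring.
split; rewrite ?rvE /=; try ring; split; rewrite ?rvE /=; try ring.
transitivity (-1 * (1 - 2 * (b * b)) + 2 * (1 - (a ^+ 2 + b ^+ 2))); last by rewrite hab; ring.
ring.
Qed.

Lemma good_ht (a b : R) : unit2 a b -> goodT (halfturn a b) (-1) (-1) /\ \tr (halfturn a b) = -1.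
Proof.
rewrite /unit2 => hab; rewrite tr3 !htE /=; split; last first.
  transitivity (2 * (a ^+ 2 + b ^+ 2) - 3); first ring. by rewrite hab; ring.
split; rewrite ?htE /=; try ring; split; rewrite ?htE /=; try ring.
transitivity (-1 * (2 * (b * b) - 1) - 2 * (1 - (a ^+ 2 + b ^+ 2))); last by rewrite hab; ring.
ring.
Qed.

End Mats.

Lemma key (R : realType) (V : finType) (E : {set {set V}}) (p : V -> 'rV[R]_3)
  (f h : V -> V) (T : 'M[R]_3) (e1 e2 : R) (v0 : V) :
  (forall v, f (h v) = v) -> (forall v, h (f v) = v) ->
  (forall e : {set V}, (f @: e \in E) = (e \in E)) ->
  (forall e : {set V}, (h @: e \in E) = (e \in E)) ->
  (forall v, p (f v) = (T *m (p v)^T)^T) -> T *m T^T = 1%:M -> goodT T e1 e2 ->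
  on_cylinder (p v0) -> simple_graph E -> inf_rigid E p -> row_free (rigidity_matrix E p) ->
  (#|[set e in E | f @: e == e]| + #|[set v | f v == v]|)%:R =
    #|[set v | f v == v]|%:R * \tr T - (e1 + e2).
Proof.
move=> Hfh Hhf HfE HhE Hp HT [T02 T12 T20 T21 [T22 T01 T00 He2]] Hcyl Hs Hrig Hfree.
rewrite -(tr_P R HfE) -tr_rho.
exact: (trace_eq Hfh Hhf HfE HhE Hp HT T02 T12 T20 T21 T22 T01 T00 He2 Hcyl Hs Hrig Hfree).
Qed.

Lemma natR_add (R : realType) (a b c : nat) : (a%:R + b%:R = c%:R :> R) -> (a + b = c)%N.
Proof. by rewrite -natrD => /eqP; rewrite eqr_nat => /eqP. Qed.

Theorem theorem3p8 (R : realType) (gT : finGroupType) (V : finType)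
  (E : {set {set V}}) (phi : gT -> V -> V) (tau : gT -> 'M[R]_3)
  (p : V -> 'rV[R]_3) :
  (0 < #|{: V}|)%N ->
  simple_graph E ->
  aut_hom E phi ->
  orth_inj_hom tau ->
  allowed_group tau ->
  framework_on_Y E p ->
  gamma_symmetric phi tau p ->
  isostatic E p ->
  let no_fixed_edge g := fixed_edges E phi g = set0 in
  let two_edges_no_vertex g :=
    #|fixed_edges E phi g| = 2%N /\ fixed_vertices phi g = set0 in
  let c2_cond g :=
    (#|fixed_edges E phi g| = 2%N /\ fixed_vertices phi g = set0) \/
    (fixed_edges E phi g = set0 /\ #|fixed_vertices phi g| = 1%N) in
  tight22 E /\
  (is_Ci tau -> forall g, tau g = inversion -> no_fixed_edge g) /\
  (forall a b, is_Cs_vert tau a b -> forall g, tau g = refl_vert a b -> no_fixed_edge g) /\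
  (is_Cs_horiz tau -> forall g, tau g = refl_horiz -> no_fixed_edge g) /\
  (forall a b, is_C2 tau a b -> forall g, tau g = halfturn a b -> c2_cond g) /\
  (forall a b c d, is_C2v tau a b c d -> forall g,
     (tau g = refl_vert a b -> no_fixed_edge g) /\
     (tau g = refl_horiz -> no_fixed_edge g) /\
     (tau g = halfturn c d -> c2_cond g)) /\
  (forall a b, is_C2h tau a b -> forall g,
     (tau g = refl_vert a b -> no_fixed_edge g) /\
     (tau g = inversion -> no_fixed_edge g) /\
     (tau g = halfturn a b -> two_edges_no_vertex g)).
Proof.
move=> nV Hs [Hinj [HE Hhom]] [HTo [HThom HTinj]] _ [Hcyl _] Hsym [Hrig Hfree].
move=> nfe tenv c2c.
have [v0 _] : exists v0 : V, v0 \in {: V} by apply/card_gt0P.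
have phi1 : forall v, phi 1%g v = v.
  by move=> v; apply: (Hinj 1%g); rewrite -Hhom mulg1.
have KEY : forall g M e1 e2, tau g = M -> goodT M e1 e2 ->
  (#|fixed_edges E phi g| + #|fixed_vertices phi g|)%:R =
  #|fixed_vertices phi g|%:R * \tr M - (e1 + e2).
  move=> g M e1 e2 <- Hg; rewrite /fixed_edges /fixed_vertices.
  apply: (@key R V E p (phi g) (phi (g^-1)%g) (tau g) e1 e2 v0).
  - by move=> v; rewrite -Hhom mulgV phi1.
  - by move=> v; rewrite -Hhom mulVg phi1.
  - exact: HE.
  - exact: HE.
  - exact: Hsym.
  - exact: HTo.
  - exact: Hg.
  - exact: Hcyl.
  - exact: Hs.
  - exact: Hrig.
  - exact: Hfree.
have NF1 : forall g M e1 e2, tau g = M -> goodT M e1 e2 -> \tr M = 1 -> e1 + e2 = 0 -> nfe g.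
  move=> g M e1 e2 HM Hg Htr He; have := KEY _ _ _ _ HM Hg.
  rewrite Htr He mulr1 subr0 => /eqP; rewrite eqr_nat => /eqP H.
  by rewrite /nfe; apply/cards0_eq; lia.
have HT2 : forall g (a b : R), unit2 a b -> tau g = halfturn a b ->
  (#|fixed_edges E phi g| + 2 * #|fixed_vertices phi g| = 2)%N.
  move=> g a b hab HM; have [Hg Htr] := good_ht hab.
  have := KEY _ _ _ _ HM Hg; rewrite Htr => H.
  have : ((#|fixed_edges E phi g| + #|fixed_vertices phi g|) + #|fixed_vertices phi g|)%:R = 2%:R :> R.
    by rewrite natrD H; ring.
  move/eqP; rewrite eqr_nat => /eqP; lia.
have C2C : forall g (a b : R), unit2 a b -> tau g = halfturn a b -> c2c g.
  move=> g a b hab HM; have := HT2 _ _ _ hab HM; rewrite /c2c.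
  case: (#|fixed_vertices phi g|) (@cards0_eq _ (fixed_vertices phi g)) (@cards0_eq _ (fixed_edges E phi g)) => [|[|k]] H0 H1 Hc.
  - by left; split; [lia | exact: H0].
  - by right; split => //; apply: H1; lia.
  - lia.
split.
  split; first exact: (sparse Hs Hfree Hcyl).
  have Hid := @key R V E p id id 1%:M 1 1 v0.
  have Hi : forall e : {set V}, (id @: e \in E) = (e \in E) by move=> e; rewrite imset_id.
  have Hp1 : forall v, p (id v) = ((1%:M : 'M[R]_3) *m (p v)^T)^T by move=> v; rewrite mul1mx trmxK.
  have HT1 : (1%:M : 'M[R]_3) *m (1%:M)^T = 1%:M by rewrite trmx1 mulmx1.
  have := Hid (fun=> erefl) (fun=> erefl) Hi Hi Hp1 HT1 (proj1 (good_id R)) (Hcyl v0) Hs Hrig Hfree.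
  rewrite (proj2 (good_id R)).
  have -> : [set e in E | id @: e == e] = E by apply/setP => e; rewrite inE imset_id eqxx andbT.
  have -> : [set v | id v == v] = [set: V] by apply/setP => v; rewrite !inE eqxx.
  rewrite cardsT => H.
  have : ((#|E| + #|V|) + 2)%:R = (3 * #|V|)%:R :> R by rewrite natrD H natrM; ring.
  move/eqP; rewrite eqr_nat => /eqP; lia.
have NFinv : forall g, tau g = inversion -> nfe g.
  move=> g Hg; have [G Htr] := good_inv R; have := KEY _ _ _ _ Hg G; rewrite Htr => H.
  have : ((#|fixed_edges E phi g| + #|fixed_vertices phi g|) + 3 * #|fixed_vertices phi g|)%:R = 0%:R :> R.
    by rewrite natrD H natrM; ring.
  move/eqP; rewrite eqr_nat => /eqP Hn; rewrite /nfe; apply/cards0_eq; lia.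
have NFrv : forall g (a b : R), unit2 a b -> tau g = refl_vert a b -> nfe g.
  move=> g a b hab Hg; have [G Htr] := good_rv hab; apply: (NF1 _ _ _ _ Hg G Htr); ring.
have NFrh : forall g, tau g = refl_horiz -> nfe g.
  move=> g Hg; have [G Htr] := good_rh R; apply: (NF1 _ _ _ _ Hg G Htr); ring.
split; first by move=> _; exact: NFinv.
split; first by move=> a b [hab _] g; exact: NFrv.
split; first by move=> _; exact: NFrh.
split; first by move=> a b [hab _] g; exact: C2C.
split.
  move=> a b c d [hab [hcd _]] g; split; [exact: NFrv | split; [exact: NFrh | exact: C2C]].
move=> a b [hab Him] g; split; [exact: NFrv | split; [exact: NFinv | move=> Hg]].
have H2 := HT2 _ _ _ hab Hg.
have [gs Hgs] : exists gs, tau gs = refl_vert a b by apply/(Him (refl_vert a b)); rewrite !inE eqxx !orbT.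
have Hht : halfturn a b = - refl_vert a b by rewrite /halfturn /refl_vert opprB.
have comm : (g * gs = gs * g)%g by apply: HTinj; rewrite !HThom Hg Hgs Hht mulNmx mulmxN.
have FV1 : #|fixed_vertices phi g| != 1%N.
  apply/negP => /cards1P [v Hv].
  have vin : v \in fixed_vertices phi g by rewrite Hv set11.
  have pv : phi g v = v by move: vin; rewrite inE => /eqP.
  have : phi gs v \in fixed_vertices phi g by rewrite inE -Hhom comm Hhom pv.
  rewrite Hv inE => /eqP psv.
  have q1 : p v = (refl_vert a b *m (p v)^T)^T by rewrite -Hgs -Hsym psv.
  have q2 : p v = - p v.
    rewrite -{1}pv Hsym Hg Hht mulNmx [in RHS]q1; apply/matrixP => i j; by rewrite !mxE.
  have x0 : xco (p v) = 0.
    by have := congr1 (fun M : 'rV[R]_3 => M 0 0) q2; rewrite /xco /= mxE => ?; lra.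
  have y0 : yco (p v) = 0.
    by have := congr1 (fun M : 'rV[R]_3 => M 0 1) q2; rewrite /yco /= mxE => ?; lra.
  have := Hcyl v; rewrite /on_cylinder x0 y0 => H.
  have : (0 : R) = 1 by rewrite -H; ring.
  by move/eqP; rewrite eq_sym oner_eq0.
rewrite /tenv; split; first lia.
apply/cards0_eq; lia.
Qed.
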